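(* $\mathbf{LMO}(\Sigma)\subseteq V_\Sigma(\overline{\mathbf{J}})$.
   Context: A MON-1qfa over a finite alphabet $\Sigma$ is a tuple $A=\langle\Sigma\cup\{\#\},(O_c)_{c\in\Sigma\cup\{\#\}},\pi_0,F\rangle$, where $\pi_0\in\mathbb{C}^{1\times m}$ has norm $1$, each $O_c$ is an observable (Hermitian $m\times m$ matrix) with spectral decomposition $O_c=\sum_{r\in V(O_c)} r\,P_c(r)$ into orthogonal projectors, and $F\subseteq V(O_\#)$. For $x=x_1\cdots x_n$, with $\rho_0=\pi_0^\dagger\pi_0$ and $\rho_i=\sum_{r}P_{x_i}(r)\rho_{i-1}P_{x_i}(r)$, the acceptance probability is $p_A(x)=\sum_{r\in F}\mathrm{tr}(P_\#(r)\rho_n)$. $A$ recognizes $L$ with isolated cut-point $\lambda$ if for all $x\in\Sigma^*$, $x\in L\Leftrightarrow p_A(x)>\lambda$, and there is $\delta>0$ with $|p_A(x)-\lambda|\ge\delta$ for all $x$. $\mathbf{LMO}(\Sigma)$ is the class of languages over $\Sigma$ recognized by some MON-1qfa with isolated cut-point. For a regular language $L$, $M(L)$ is its syntactic monoid and $\phi_L:\Sigma^*\to M(L)$ the syntactic morphism. $\overline{\mathbf{J}}$ is the literal pseudovariety of $J$-trivial syntactic monoids $M(L)$ (i.e. $MxM=MyM\Rightarrow x=y$) whose syntactic morphism satisfies $\phi_L(\sigma)\phi_L(\sigma)=\phi_L(\sigma)$ for all $\sigma\in\Sigma$; $V_\Sigma(\overline{\mathbf{J}})$ is the class of regular languages $L\subseteq\Sigma^*$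 such that $M(L)$ is $J$-trivial and $\phi_L(\sigma)^2=\phi_L(\sigma)$ for every $\sigma\in\Sigma$. *)

(* Defs.v *)
From HB Require Import structures.
From mathcomp Require Import all_boot all_order all_algebra.
From mathcomp Require Import reals.
From mathcomp Require Import complex.

Unset Implicit Arguments.
Unset Strict Implicit.
Unset Printing Implicit Defensive.

Import Order.TTheory GRing.Theory Num.Theory.
Local Open Scope ring_scope.

Definition adjmx (R : rcfType) (p q : nat) (A : 'M[R[i]]_(p, q)) : 'M[R[i]]_(q, p) :=
  (map_mx (@conjc R) A)^T.
Arguments adjmx {R p q} A.

Section MON1qfa.
Variables (R : realType) (Sigma : finType) (m : nat).
Local Notation C := R[i].

(* The alphabet Sigma \cup {#} is represented by [option Sigma]:
   [Some s] is the letter s and [None] is the end-marker #.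
   For each c, the observable O_c is given together with its spectral
   decomposition O_c = \sum_(i < nout c) eigv c i * proj c i, where
   V(O_c) = {eigv c i | i} (distinct real eigenvalues) and proj c i = P_c(eigv c i)
   are the (nonzero, pairwise orthogonal) eigenprojectors, summing to the identity.
   F is the set of indices of accepting eigenvalues of O_#. *)
Record mon1qfa := MON1qfa {
  nout : option Sigma -> nat;
  eigv : forall c, 'I_(nout c) -> R;
  proj : forall c, 'I_(nout c) -> 'M[C]_m;
  obs  : option Sigma -> 'M[C]_m;
  pi0  : 'rV[C]_m;
  accF : {set 'I_(nout None)};
  obs_herm  : forall c, adjmx (obs c) = obs c;
  obs_spec  : forall c, obs c = \sum_(i < nout c) real_complex R (eigv c i) *: proj c i;
  eigv_inj  : forall c, injective (eigv c);
  proj_herm : forall c i, adjmx (proj c i) = proj c i;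
  proj_idem : forall c i, proj c i *m proj c i = proj c i;
  proj_orth : forall c i j, i != j -> proj c i *m proj c j = 0;
  proj_sum  : forall c, \sum_(i < nout c) proj c i = 1%:M;
  proj_neq0 : forall c i, proj c i != 0;
  pi0_norm  : (pi0 *m adjmx pi0) ord0 ord0 = 1
}.

Variable A : mon1qfa.

Definition measure_step (c : option Sigma) (rho : 'M[C]_m) : 'M[C]_m :=
  \sum_(i < nout A c) (proj A c i *m rho *m proj A c i).

Definition rho0 : 'M[C]_m := adjmx (pi0 A) *m pi0 A.

Definition rho_of (x : seq Sigma) : 'M[C]_m :=
  foldl (fun rho s => measure_step (Some s) rho) rho0 x.

(* p_A(x) = sum_{r in F} tr(P_#(r) rho_n)  (a real number; we take its real part) *)
Definition acc_prob (x : seq Sigma) : R :=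
  complex.Re (\sum_(i in accF A) \tr (proj A None i *m rho_of x)).

End MON1qfa.
Arguments acc_prob {R Sigma m} A x.
Arguments rho_of {R Sigma m} A x.
Arguments measure_step {R Sigma m} A c rho.
Arguments rho0 {R Sigma m} A.

Definition recognizes_isolated {Sigma : finType} {R : realType} {m : nat}
    (A : mon1qfa R Sigma m) (L : pred (seq Sigma)) (lam : R) : Prop :=
  (forall x, L x <-> lam < acc_prob A x) /\
  (exists2 d : R, 0 < d & forall x, d <= `|acc_prob A x - lam|).

Definition LMO {Sigma : finType} (R : realType) (L : pred (seq Sigma)) : Prop :=
  exists (m : nat) (A : mon1qfa R Sigma m) (lam : R), recognizes_isolated A L lam.

Definition regular {Sigma : finType} (L : pred (seq Sigma)) : Prop :=
  exists (Q : finType) (q0 : Q) (delta : Q -> Sigma -> Q) (Fin : pred Q),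
    forall w, L w = Fin (foldl delta q0 w).

(* syntactic congruence; M(L) = (seq Sigma)/synt_eq L, phi_L w = class of w *)
Definition synt_eq {Sigma : finType} (L : pred (seq Sigma)) (u v : seq Sigma) : Prop :=
  forall x y, L (x ++ u ++ y) = L (x ++ v ++ y).

(* the class of w lies in M phi_L(u) M *)
Definition in_ideal {Sigma : finType} (L : pred (seq Sigma)) (u w : seq Sigma) : Prop :=
  exists a b, synt_eq L w (a ++ u ++ b).

Definition synt_J_trivial {Sigma : finType} (L : pred (seq Sigma)) : Prop :=
  forall u v, (forall w, in_ideal L u w <-> in_ideal L v w) -> synt_eq L u v.

Definition synt_letters_idem {Sigma : finType} (L : pred (seq Sigma)) : Prop :=
  forall s : Sigma, synt_eq L [:: s; s] [:: s].

Definition in_V_Jbar {Sigma : finType} (L : pred (seq Sigma)) : Prop :=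
  regular L /\ synt_J_trivial L /\ synt_letters_idem L.

(* Main.v *)
From HB Require Import structures.
Require Import Defs.
From mathcomp Require Import all_boot all_order all_algebra reals complex.
From mathcomp Require Import ring lra zify.
From Stdlib Require Import ClassicalEpsilon.
Import Order.TTheory GRing.Theory Num.Theory.
Local Open Scope ring_scope.
Set Implicit Arguments. Unset Strict Implicit. Unset Printing Implicit Defensive.


Section Coords.
Variables (R : realType) (m : nat).
Local Notation C := R[i].
Local Notation M := 'M[C]_m.
Local Notation I3 := ('I_m * 'I_m * bool)%type.

Definition crd (X : M) (t : I3) : R :=
  if t.2 then complex.Re (X t.1.1 t.1.2) else complex.Im (X t.1.1 t.1.2).

Definition ip (X Y : M) : R := \sum_t crd X t * crd Y t.
Definition nn (X : M) : R := ip X X.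

Lemma ReD (x y : C) : complex.Re (x + y) = complex.Re x + complex.Re y. Proof. by case: x; case: y. Qed.
Lemma ImD (x y : C) : complex.Im (x + y) = complex.Im x + complex.Im y. Proof. by case: x; case: y. Qed.
Lemma ReN (x : C) : complex.Re (- x) = - complex.Re x. Proof. by case: x. Qed.
Lemma ImN (x : C) : complex.Im (- x) = - complex.Im x. Proof. by case: x. Qed.
Lemma Re0 : complex.Re (0 : C) = 0. Proof. by []. Qed.
Lemma Im0 : complex.Im (0 : C) = 0. Proof. by []. Qed.

Lemma crdD X Y t : crd (X + Y) t = crd X t + crd Y t.
Proof. by rewrite /crd !mxE; case: t.2; rewrite ?ReD ?ImD. Qed.
Lemma crdN X t : crd (- X) t = - crd X t.
Proof. by rewrite /crd !mxE; case: t.2; rewrite ?ReN ?ImN. Qed.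
Lemma crdB X Y t : crd (X - Y) t = crd X t - crd Y t.
Proof. by rewrite crdD crdN. Qed.
Lemma crd0 t : crd 0 t = 0.
Proof. by rewrite /crd !mxE; case: t.2. Qed.
Lemma crd_sum (I : Type) (r : seq I) (P : pred I) (F : I -> M) t :
  crd (\sum_(i <- r | P i) F i) t = \sum_(i <- r | P i) crd (F i) t.
Proof. exact: (big_morph (crd^~ t) (fun X Y => crdD X Y t) (crd0 t)). Qed.

Lemma ipC X Y : ip X Y = ip Y X.
Proof. by apply: eq_bigr => t _; rewrite mulrC. Qed.
Lemma ipDl X Y Z : ip (X + Y) Z = ip X Z + ip Y Z.
Proof. by rewrite /ip -big_split; apply: eq_bigr => t _; rewrite crdD mulrDl. Qed.
Lemma ipDr X Y Z : ip Z (X + Y) = ip Z X + ip Z Y.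
Proof. by rewrite ipC ipDl !(ipC Z). Qed.
Lemma ipNl X Y : ip (- X) Y = - ip X Y.
Proof. by rewrite /ip -sumrN; apply: eq_bigr => t _; rewrite crdN mulNr. Qed.
Lemma ipNr X Y : ip Y (- X) = - ip Y X.
Proof. by rewrite ipC ipNl ipC. Qed.
Lemma ipBl X Y Z : ip (X - Y) Z = ip X Z - ip Y Z.
Proof. by rewrite ipDl ipNl. Qed.
Lemma ipBr X Y Z : ip Z (X - Y) = ip Z X - ip Z Y.
Proof. by rewrite ipDr ipNr. Qed.
Lemma ip0l X : ip 0 X = 0.
Proof. by rewrite /ip big1 // => t _; rewrite crd0 mul0r. Qed.
Lemma ip_suml (I : Type) (r : seq I) (P : pred I) (F : I -> M) Y :
  ip (\sum_(i <- r | P i) F i) Y = \sum_(i <- r | P i) ip (F i) Y.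
Proof.
rewrite /ip; under eq_bigr => t _ do rewrite crd_sum mulr_suml.
by rewrite exchange_big.
Qed.
Lemma ip_sumr (I : Type) (r : seq I) (P : pred I) (F : I -> M) Y :
  ip Y (\sum_(i <- r | P i) F i) = \sum_(i <- r | P i) ip Y (F i).
Proof. by rewrite ipC ip_suml; apply: eq_bigr => i _; rewrite ipC. Qed.

Lemma nn_ge0 X : 0 <= nn X.
Proof. by apply: sumr_ge0 => t _; rewrite -expr2 sqr_ge0. Qed.

Lemma crd_sq_le X t : crd X t ^+ 2 <= nn X.
Proof.
rewrite /nn /ip (bigD1 t) //= -expr2 lerDl.
by apply: sumr_ge0 => s _; rewrite -expr2 sqr_ge0.
Qed.

Lemma nn_eq0 X : nn X = 0 -> X = 0.
Proof.
move=> H; apply/matrixP => i j; rewrite mxE.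
have H1 b : crd X (i, j, b) = 0.
  by apply/eqP; rewrite -sqrf_eq0 eq_le sqr_ge0 andbT -H crd_sq_le.
move: (H1 true) (H1 false); rewrite /crd /=.
by case: (X i j) => a b /= -> ->.
Qed.

Lemma ReCmul (a b : C) : complex.Re (conjc a * b) = complex.Re a * complex.Re b + complex.Im a * complex.Im b.
Proof. by case: a; case: b => b1 b2 a1 a2 /=; ring. Qed.

Lemma Re_sum (I : Type) (r : seq I) (P : pred I) (F : I -> C) :
  complex.Re (\sum_(i <- r | P i) F i) = \sum_(i <- r | P i) complex.Re (F i).
Proof. exact: (big_morph (@complex.Re R) ReD Re0). Qed.

Lemma ip_tr X Y : ip X Y = complex.Re (\tr (adjmx X *m Y)).
Proof.
rewrite /mxtrace Re_sum /ip.
rewrite -(pair_big xpredT xpredT (fun ij b => crd X (ij, b) * crd Y (ij, b))) /=.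
rewrite -(pair_big xpredT xpredT (fun i j => \sum_b crd X (i, j, b) * crd Y (i, j, b))) /=.
rewrite exchange_big; apply: eq_bigr => i _.
rewrite mxE Re_sum; apply: eq_bigr => j _.
by rewrite big_bool /= /adjmx !mxE ReCmul addrC.
Qed.

Lemma IPB (s t : R) X Y : 0 <= s -> 0 <= t ->
  2 * s * t * `|ip X Y| <= t ^+ 2 * nn X + s ^+ 2 * nn Y.
Proof.
move=> s0 t0.
have key (e : R) : e = 1 \/ e = -1 -> 2 * s * t * (e * ip X Y) <= t ^+ 2 * nn X + s ^+ 2 * nn Y.
  move=> he; rewrite /nn /ip !mulr_sumr -big_split /=.
  apply: ler_sum => k _.
  have : 0 <= (t * crd X k - e * s * crd Y k) ^+ 2 by apply: sqr_ge0.
  by case: he => ->; nra.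
have [ge|lt] := boolP (0 <= ip X Y).
  by rewrite ger0_norm //; have := key 1 (or_introl erefl); rewrite mul1r.
rewrite ltr0_norm ?ltNge //; have := key (-1) (or_intror erefl); rewrite mulN1r; exact.
Qed.

Lemma nn_sub X Y : nn (X - Y) <= 2 * nn X + 2 * nn Y.
Proof.
rewrite /nn /ip !mulr_sumr -big_split /=; apply: ler_sum => k _.
rewrite crdB; have := sqr_ge0 (crd X k + crd Y k); nra.
Qed.

Lemma sum_sq_le (N : nat) (c : 'I_N -> R) :
  (\sum_k c k) ^+ 2 <= N%:R * \sum_k c k ^+ 2.
Proof.
rewrite expr2 mulr_suml.
have H : forall k l, c k * c l <= (c k ^+ 2 + c l ^+ 2) / 2.
  by move=> k l; have := sqr_ge0 (c k - c l); nra.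
apply: (@le_trans _ _ (\sum_k \sum_l (c k ^+ 2 + c l ^+ 2) / 2)).
  by apply: ler_sum => k _; rewrite mulr_sumr; apply: ler_sum => l _; apply: H.
rewrite (eq_bigr (fun k => (N%:R * c k ^+ 2 + \sum_l c l ^+ 2) / 2)); last first.
  move=> k _. rewrite -mulr_suml big_split /= sumr_const card_ord.
  by rewrite mulr_natl.
rewrite -mulr_suml big_split /= -mulr_sumr sumr_const card_ord mulr_natl.
lra.
Qed.

Lemma nn_sum (N : nat) (w : 'I_N -> M) :
  nn (\sum_k w k) <= N%:R * \sum_k nn (w k).
Proof.
rewrite /nn /ip exchange_big mulr_sumr.
apply: ler_sum => t _; rewrite crd_sum -expr2.
under eq_bigr do rewrite -expr2.
exact: sum_sq_le.
Qed.

End Coords.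


Section Adj.
Variable (R : realType).
Local Notation C := R[i].
Lemma adjmxM p q r (X : 'M[C]_(p, q)) (Y : 'M[C]_(q, r)) :
  adjmx (X *m Y) = adjmx Y *m adjmx X.
Proof. by rewrite /adjmx map_mxM trmx_mul. Qed.
Lemma adjmx_sum p q (I : Type) (r : seq I) (P : pred I) (F : I -> 'M[C]_(p, q)) :
  adjmx (\sum_(i <- r | P i) F i) = \sum_(i <- r | P i) adjmx (F i).
Proof.
apply/matrixP => i j; rewrite /adjmx !mxE !summxE rmorph_sum.
by apply: eq_bigr => k _; rewrite !mxE.
Qed.
End Adj.

Section Auto.
Variables (R : realType) (Sigma : finType) (m : nat) (A : mon1qfa R Sigma m).
Local Notation C := R[i].
Local Notation M := 'M[C]_m.

Definition E (c : option Sigma) (X : M) : M := measure_step A c X.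
Lemma E_lin c : linear (E c).
Proof.
move=> a X Y; rewrite /E /measure_step scaler_sumr -big_split /=.
apply: eq_bigr => i _.
by rewrite mulmxDr mulmxDl -scalemxAr -scalemxAl.
Qed.
HB.instance Definition _ c := GRing.isLinear.Build C M M *:%R (E c) (E_lin c).

Lemma E_tr c X Y : \tr (adjmx (E c X) *m Y) = \tr (adjmx X *m E c Y).
Proof.
rewrite /E /measure_step adjmx_sum mulmx_suml mulmx_sumr !linear_sum.
apply: eq_bigr => i _ /=.
rewrite !adjmxM proj_herm.
rewrite -!mulmxA mxtrace_mulC -!mulmxA.
done.
Qed.

Lemma E_sa c X Y : ip (E c X) Y = ip X (E c Y).
Proof. by rewrite !ip_tr E_tr. Qed.

Lemma E_idem c X : E c (E c X) = E c X.
Proof.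
rewrite /E /measure_step; apply: eq_bigr => i _.
rewrite mulmx_sumr mulmx_suml (bigD1 i) //= big1 ?addr0.
  by rewrite !mulmxA proj_idem -!mulmxA proj_idem.
move=> j ji; rewrite !mulmxA proj_orth 1?eq_sym // !mul0mx. done.
Qed.

Lemma ip0r (X : M) : ip X 0 = 0.
Proof. by rewrite ipC ip0l. Qed.

Lemma nn_E c X : nn X = nn (E c X) + nn (X - E c X).
Proof.
have H : ip (E c X) (X - E c X) = 0.
  by rewrite E_sa linearB /= E_idem subrr ip0r.
have eX : X = E c X + (X - E c X) by rewrite addrC subrK.
rewrite /nn {1 2}eX; set D := X - E c X in H *.
clearbody D; rewrite ipDl !ipDr H (ipC D (E c X)) H.
by rewrite addr0 add0r.
Qed.

Lemma nn_E_le c X : nn (E c X) <= nn X.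
Proof. by rewrite (nn_E c X) lerDl nn_ge0. Qed.

Lemma nn_E_eq c X : nn (E c X) = nn X -> E c X = X.
Proof.
move=> H; have : nn (X - E c X) = 0.
  by have := nn_E c X; rewrite H => h; lra.
by move/nn_eq0/eqP; rewrite subr_eq0 => /eqP.
Qed.

Definition T (w : seq Sigma) (X : M) : M := foldl (fun rho s => E (Some s) rho) X w.
Lemma T_lin w : linear (T w).
Proof.
elim: w => [|s w IH] a X Y //=.
by rewrite /T /= -IH linearP.
Qed.
HB.instance Definition _ w := GRing.isLinear.Build C M M *:%R (T w) (T_lin w).

Lemma T_nil X : T [::] X = X. Proof. by []. Qed.
Lemma T_cons s w X : T (s :: w) X = T w (E (Some s) X). Proof. by []. Qed.
Lemma T_cat w1 w2 X : T (w1 ++ w2) X = T w2 (T w1 X).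
Proof. by rewrite /T foldl_cat. Qed.
Lemma T_rcons w s X : T (rcons w s) X = E (Some s) (T w X).
Proof. by rewrite /T foldl_rcons. Qed.

Lemma T_adj w X Y : ip (T w X) Y = ip X (T (rev w) Y).
Proof.
elim: w X Y => [|s w IH] X Y; first by [].
by rewrite T_cons IH E_sa rev_cons T_rcons.
Qed.

Lemma T_contr w X : nn (T w X) <= nn X.
Proof.
elim: w X => [|s w IH] X; first by [].
by rewrite T_cons (le_trans (IH _)) // nn_E_le.
Qed.

Lemma T_fix w X : nn (T w X) = nn X -> forall s, s \in w -> E (Some s) X = X.
Proof.
elim: w X => [|s w IH] X H; first by [].
rewrite T_cons in H.
have HE : nn (E (Some s) X) = nn X.
  apply/eqP; rewrite eq_le nn_E_le /= -H; exact: T_contr.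
have HX := nn_E_eq HE.
move=> s'; rewrite in_cons => /orP [/eqP -> //|Hs'].
by apply: (IH X) => //; rewrite HX in H.
Qed.

Lemma fix_T w X : (forall s, s \in w -> E (Some s) X = X) -> T w X = X.
Proof.
elim: w X => [|s w IH] X H; first by [].
rewrite T_cons H ?mem_head // IH // => s' Hs'; apply: H; by rewrite in_cons Hs' orbT.
Qed.

Lemma T_fix_eq w X : T w X = X -> forall s, s \in w -> E (Some s) X = X.
Proof. by move=> H; apply: T_fix; rewrite H. Qed.

Definition pw (w : seq Sigma) n := flatten (nseq n w).
Lemma pwS w n : pw w n.+1 = w ++ pw w n. Proof. by []. Qed.
Lemma pwSr w n : pw w n.+1 = pw w n ++ w.
Proof.
elim: n => [|n IH]; first by rewrite /pw /= cats0.
by rewrite pwS {1}IH catA -pwS.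
Qed.
Lemma pwD w n k : pw w (n + k) = pw w n ++ pw w k.
Proof. by elim: n => [|n IH] //=; rewrite addSn !pwS IH catA. Qed.
Lemma pwM w n k : pw w (n * k) = pw (pw w n) k.
Proof. by elim: k => [|k IH]; rewrite ?muln0 // mulnS pwD IH pwS. Qed.
Lemma rev_pw w n : rev (pw w n) = pw (rev w) n.
Proof. by elim: n => [|n IH] //; rewrite pwS rev_cat IH pwSr. Qed.
Lemma T_pw w n X : T (pw w n) X = iter n (T w) X.
Proof. by elim: n X => [|n IH] X //; rewrite pwS T_cat IH iterSr. Qed.

Definition Qm : M := \sum_(i in accF _ _ _ A) proj _ _ _ A None i.

Lemma rho_ofE x : rho_of A x = T x (rho0 A). Proof. by []. Qed.

Lemma adj_Qm : adjmx Qm = Qm.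
Proof. by rewrite /Qm adjmx_sum; apply: eq_bigr => i _; rewrite proj_herm. Qed.

Lemma acc_ip x : acc_prob A x = ip Qm (rho_of A x).
Proof.
rewrite ip_tr adj_Qm /acc_prob /Qm mulmx_suml. congr (complex.Re _); by rewrite raddf_sum.
Qed.

Lemma acc_split x w y :
  acc_prob A (x ++ w ++ y) = ip (T (rev y) Qm) (T w (rho_of A x)).
Proof. by rewrite acc_ip rho_ofE !T_cat ipC T_adj ipC. Qed.

End Auto.


Section Dec.
Variables (R : realType) (Sigma : finType) (m : nat) (A : mon1qfa R Sigma m).
Local Notation C := R[i].
Local Notation M := 'M[C]_m.
Local Notation T := (T A).

Definition Dm w (X : M) : M := X - T w X.
Lemma Dm_lin w : linear (Dm w).
Proof. by move=> a X Y; rewrite /Dm linearP scalerBr addrACA opprD. Qed.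
HB.instance Definition _ w := GRing.isLinear.Build C M M *:%R (Dm w) (Dm_lin w).
Definition Fm w : 'End(M) := linfun (Dm w).
Lemma FmE w X : Fm w X = X - T w X.
Proof. by rewrite lfunE. Qed.

Lemma T_rev_fix w f : T w f = f -> T (rev w) f = f.
Proof.
move=> Hf; apply: fix_T => s; rewrite mem_rev; exact: T_fix_eq Hf s.
Qed.

Lemma dec w g : (forall f, T w f = f -> ip g f = 0) -> exists z, g = z - T w z.
Proof.
move=> Hg.
have orth z f : T w f = f -> ip (z - T w z) f = 0.
  by move=> Hf; rewrite ipBl T_adj (T_rev_fix Hf) subrr.
have cap : (lker (Fm w) :&: limg (Fm w) = 0)%VS.
  apply/eqP; rewrite -subv0; apply/subvP => x /memv_capP [Hk Hi]; rewrite memv0.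
  move: Hk; rewrite memv_ker FmE subr_eq0 => /eqP Hk.
  case/memv_imgP: Hi => z _; rewrite FmE => xE.
  apply/eqP; apply: nn_eq0; rewrite /nn {1}xE; exact: orth.
have full : (lker (Fm w) + limg (Fm w) = fullv)%VS.
  apply/eqP; rewrite eqEdim subvf /= dimv_disjoint_sum //.
  by rewrite -(limg_ker_dim (Fm w) fullv) capfv.
have : g \in (lker (Fm w) + limg (Fm w))%VS by rewrite full memvf.
case/memv_addP => k Hk [r Hr] gE.
move: Hk; rewrite memv_ker FmE subr_eq0 => /eqP/esym Hk.
case/memv_imgP: Hr => z _; rewrite FmE => rE.
have k0 : k = 0.
  by apply: nn_eq0; have := Hg k Hk; rewrite gE ipDl rE (orth _ _ Hk) addr0.
by exists z; rewrite gE k0 add0r rE.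
Qed.
End Dec.


Section Recog.
Variables (R : realType) (Sigma : finType) (m : nat) (A : mon1qfa R Sigma m).
Variables (L : pred (seq Sigma)) (lam d : R).
Hypothesis HL : forall x, L x <-> lam < acc_prob A x.
Hypothesis Hd : 0 < d.
Hypothesis Hsep : forall x, d <= `|acc_prob A x - lam|.
Local Notation C := R[i].
Local Notation M := 'M[C]_m.
Local Notation T := (T A).
Local Notation I3 := ('I_m * 'I_m * bool)%type.

Lemma L_true x : L x -> lam + d <= acc_prob A x.
Proof.
move=> /HL h; have := Hsep x; rewrite ger0_norm; first lra.
by rewrite subr_ge0 ltW.
Qed.
Lemma L_false x : ~~ L x -> acc_prob A x <= lam - d.
Proof.
move=> h; have h' : acc_prob A x <= lam.
  by rewrite leNgt; apply/negP => /HL; apply/negP.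
have := Hsep x; rewrite ler0_norm; first lra.
by rewrite subr_le0.
Qed.

Lemma acc_eqL x y : acc_prob A x = acc_prob A y -> L x = L y.
Proof.
move=> H; apply/idP/idP => /HL h; apply/HL; by rewrite ?H // -H.
Qed.

Lemma close_L x y : `|acc_prob A x - acc_prob A y| < 2 * d -> L x = L y.
Proof.
move=> H; case Lx: (L x); case Ly: (L y) => //.
  have := L_true Lx; have := L_false (negbT Ly); move: H.
  rewrite ltr_norml; lra.
have := L_true Ly; have := L_false (negbT Lx); move: H.
rewrite ltr_norml; lra.
Qed.

Lemma letters_idem : synt_letters_idem L.
Proof.
move=> s x y; apply: acc_eqL; rewrite !acc_split.
by rewrite !T_cons E_idem.
Qed.

Definition B0 : R := nn (rho0 A).
Definition Mb : R := B0 + 1.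

Lemma rho_nn w : nn (rho_of A w) <= B0.
Proof. exact: T_contr. Qed.

Lemma abs_le_sq (a B : R) : a ^+ 2 <= B -> `|a| <= B + 1.
Proof.
move=> h; have h0 := sqr_ge0 (a - 1/2); have h1 := sqr_ge0 (a + 1/2).
rewrite ler_norml; apply/andP; split; nra.
Qed.

Lemma crd_bound w t : `|crd (rho_of A w) t| <= Mb.
Proof.
apply: abs_le_sq; apply: le_trans (rho_nn w); exact: crd_sq_le.
Qed.

Definition NQ : R := nn (Qm A).
Definition K0 : R := #|{: I3}|%:R.
Definition Nr : nat := (Num.bound ((NQ + K0) / d)).+1.

Lemma Nr_gt0 : (0 < Nr%:R :> R).
Proof. by rewrite ltr0n. Qed.

Lemma Nr_big : NQ + K0 < Nr%:R * d.
Proof.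
have h0 : 0 <= (NQ + K0) / d.
  by apply: divr_ge0; [rewrite addr_ge0 ?nn_ge0 ?ler0n | exact: ltW].
have := archi_boundP h0; rewrite ltr_pdivrMr // => h.
apply: lt_le_trans h _; rewrite ler_pM2r // ler_nat /Nr; by [].
Qed.

Definition rnd (X : M) t : nat := Num.truncn (Nr%:R * (crd X t + Mb)).
Definition Kb : nat := Num.truncn (Nr%:R * (2 * Mb)).

Lemma rnd_arg_ge0 w t : 0 <= Nr%:R * (crd (rho_of A w) t + Mb).
Proof.
apply: mulr_ge0; first by rewrite ler0n.
have := crd_bound w t; rewrite ler_norml => /andP [h _]; lra.
Qed.

Lemma rnd_le w t : (rnd (rho_of A w) t <= Kb)%N.
Proof.
have h0 := rnd_arg_ge0 w t.
rewrite /Kb truncn_ge_nat; last first.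
  apply: mulr_ge0; first by rewrite ler0n.
  by have := nn_ge0 (rho0 A); rewrite /Mb /B0; lra.
have h1 : (rnd (rho_of A w) t)%:R <= Nr%:R * (crd (rho_of A w) t + Mb).
  by rewrite /rnd truncn_le.
apply: le_trans h1 _.
apply: ler_wpM2l; first by rewrite ler0n.
have := crd_bound w t; rewrite ler_norml => /andP [_ h]; lra.
Qed.

Local Notation Qst := {ffun I3 -> 'I_Kb.+1}.
Definition roundw (w : seq Sigma) : Qst :=
  [ffun t => inord (rnd (rho_of A w) t)].

Lemma round_crd w w' t : roundw w = roundw w' ->
  (Nr%:R * (crd (rho_of A w) t - crd (rho_of A w') t)) ^+ 2 < 1.
Proof.
move=> /ffunP /(_ t); rewrite !ffunE => /(congr1 (@nat_of_ord _)).
rewrite !inordK ?ltnS ?rnd_le // /rnd => e.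
have h1 := truncn_itv (rnd_arg_ge0 w t).
have h2 := truncn_itv (rnd_arg_ge0 w' t).
rewrite e in h1; move: h1 h2.
set n := Num.truncn _; move=> /andP [a1 b1] /andP [a2 b2].
have : `|Nr%:R * (crd (rho_of A w) t - crd (rho_of A w') t)| < 1.
  rewrite ltr_norml; apply/andP; split.
    move: b1 a2; rewrite -natr1; nra.
  move: b2 a1; rewrite -natr1; nra.
move=> h; rewrite -real_normK ?num_real //.
have h0 := normr_ge0 (Nr%:R * (crd (rho_of A w) t - crd (rho_of A w') t)).
nra.
Qed.

Lemma round_nn w w' : roundw w = roundw w' ->
  Nr%:R ^+ 2 * nn (rho_of A w - rho_of A w') <= K0.
Proof.
move=> e; rewrite /nn /ip mulr_sumr /K0 -sum1_card natr_sum.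
apply: ler_sum => t _; rewrite crdB -expr2 -exprMn.
exact: ltW (round_crd t e).
Qed.

Lemma round_nerode w w' : roundw w = roundw w' ->
  forall y, L (w ++ y) = L (w' ++ y).
Proof.
move=> e y; apply: close_L.
have := acc_split A w [::] y; have := acc_split A w' [::] y; rewrite !cat0s => -> ->.
rewrite !T_nil -ipBr.
set q := T (rev y) (Qm A); set D := rho_of A w - rho_of A w'.
have hq : nn q <= NQ by apply: T_contr.
have hD := round_nn e.
have := @IPB _ _ Nr%:R 1 q D (ler0n _ _) ler01.
rewrite expr1n mul1r mulr1 => h.
have hb := Nr_big; have hN := Nr_gt0. rewrite -/D in hD.
have hNd : 0 < Nr%:R * d by apply: mulr_gt0.
have h2 : 2 * Nr%:R * `|ip q D| < 2 * Nr%:R * (2 * d) by lra.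
by rewrite ltr_pM2l ?mulr_gt0 // in h2.
Qed.

Definition rep (k : Qst) : seq Sigma :=
  epsilon (inhabits [::]) (fun w => roundw w = k).

Lemma rep_spec w : roundw (rep (roundw w)) = roundw w.
Proof. by apply: (epsilon_spec (inhabits [::]) (fun w' => roundw w' = roundw w)); exists w. Qed.

Definition delta (k : Qst) (s : Sigma) : Qst := roundw (rep k ++ [:: s]).
Definition q0 : Qst := roundw [::].

Lemma dfa_inv w : let k := foldl delta q0 w in
  roundw (rep k) = k /\ forall y, L (rep k ++ y) = L (w ++ y).
Proof.
elim/last_ind: w => [|w s [IH1 IH2]] /=.
  split; first exact: rep_spec.
  by move=> y; rewrite -[y]cat0s; apply: round_nerode; rewrite rep_spec.
rewrite foldl_rcons; split; first exact: rep_spec.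
move=> y; rewrite {1}/delta (round_nerode (rep_spec _)) -catA IH2.
by rewrite cat_rcons.
Qed.

Lemma regular_L : regular L.
Proof.
exists Qst, q0, delta, (fun k => L (rep k)); move=> w /=.
have := dfa_inv w; move=> /= [_ H]; by rewrite -[in LHS](cats0 w) -H cats0.
Qed.

End Recog.


Section Synt.
Local Open Scope nat_scope.
Variables (Sigma : finType) (L : pred (seq Sigma)).
Local Notation "u ~ v" := (synt_eq L u v) (at level 70).

Lemma synt_refl u : u ~ u. Proof. by []. Qed.
Lemma synt_sym u v : u ~ v -> v ~ u. Proof. by move=> h x y; rewrite h. Qed.
Lemma synt_trans u v w : u ~ v -> v ~ w -> u ~ w.
Proof. by move=> h1 h2 x y; rewrite h1 h2. Qed.
Lemma synt_cong a b u v : u ~ v -> a ++ u ++ b ~ a ++ v ++ b.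
Proof.
move=> h x y.
by rewrite -!catA catA [x ++ a ++ v ++ _]catA (h (x ++ a) (b ++ y)).
Qed.
Lemma synt_congl a u v : u ~ v -> a ++ u ~ a ++ v.
Proof. by move=> h; have := synt_cong a [::] h; rewrite !cats0. Qed.
Lemma synt_congr b u v : u ~ v -> u ++ b ~ v ++ b.
Proof. by move=> h; have := synt_cong [::] b h. Qed.

Hypothesis Lreg : regular L.

Lemma idem_pow X : exists p, (0 < p)%N /\ pw X (p + p) ~ pw X p.
Proof.
case: Lreg => Q [q0 [delta [Fin HF]]].
pose f n : {ffun Q -> Q} := [ffun q => foldl delta q (pw X n)].
have fD n k : f (n + k) = [ffun q => f k (f n q)].
  by apply/ffunP => q; rewrite !ffunE pwD foldl_cat.
have fsynt n k : f n = f k -> pw X n ~ pw X k.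
  move=> e x y; rewrite !HF !foldl_cat.
  by have := congr1 (fun g : {ffun Q -> Q} => g (foldl delta q0 x)) e; rewrite !ffunE => ->.
pose F (i : 'I_(#|{ffun Q -> Q}|.+1)) := f i.
have : ~~ injectiveb F.
  apply/negP => /injectiveP /leq_card; rewrite card_ord ltnn //.
case/injectivePn => i [j ij eF].
have [i' [j' [lt eF']]] : exists i' j', (i' < j')%N /\ f i' = f j'.
  case: (ltngtP i j) => h.
  - by exists i, j.
  - by exists j, i.
  - by move: ij; rewrite (ord_inj h) eqxx.
pose dd := (j' - i')%N.
have fper a k : (i' <= a)%N -> f (a + k * dd) = f a.
  move=> ha; elim: k => [|k IH]; first by rewrite addn0.
  have -> : (a + k.+1 * dd = j' + (a - i' + k * dd))%N.
    rewrite mulSn /dd; lia.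
  rewrite fD -eF' -fD.
  have -> : (i' + (a - i' + k * dd) = a + k * dd)%N by lia.
  exact: IH.
exists (i'.+1 * dd)%N; split.
  by rewrite muln_gt0 /dd subn_gt0 lt.
apply: fsynt; rewrite fper //.
rewrite /dd; apply: leq_trans (leq_pmulr _ _); last by rewrite subn_gt0.
exact: leqnSn.
Qed.

Lemma idem_powk e : pw e 2 ~ e -> forall k, (0 < k)%N -> pw e k ~ e.
Proof.
move=> h; elim=> [//|k IH] _.
case: k IH => [|k] IH; first by rewrite /pw /= cats0.
rewrite pwS; apply: synt_trans (synt_congl e (IH isT)) _.
by move: h; rewrite /pw /= cats0.
Qed.

Lemma idem_pow2 X Y : exists p, (0 < p)%N /\ pw X (p + p) ~ pw X p /\ pw Y (p + p) ~ pw Y p.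
Proof.
have [p1 [p10 h1]] := idem_pow X; have [p2 [p20 h2]] := idem_pow Y.
have h1' : pw (pw X p1) 2 ~ pw X p1 by rewrite -pwM muln2 -addnn.
have h2' : pw (pw Y p2) 2 ~ pw Y p2 by rewrite -pwM muln2 -addnn.
exists (p1 * p2)%N; split; first by rewrite muln_gt0 p10.
split.
  rewrite -mulnDr !pwM; apply: synt_trans (idem_powk h1' _) _; first by rewrite addn_gt0 p20.
  by apply: synt_sym; apply: idem_powk.
rewrite mulnC -mulnDr !pwM; apply: synt_trans (idem_powk h2' _) _; first by rewrite addn_gt0 p10.
by apply: synt_sym; apply: idem_powk.
Qed.

End Synt.


Section Anal.
Variables (R : realType) (Sigma : finType) (m : nat) (A : mon1qfa R Sigma m).
Local Notation C := R[i].
Local Notation M := 'M[C]_m.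
Local Notation T := (T A).

Lemma nn_add (X Y : M) : nn (X + Y) <= 2 * nn X + 2 * nn Y.
Proof. by have := nn_sub X (- Y); rewrite opprK /nn ipNl ipNr opprK. Qed.

Lemma T_adj' w (X Y : M) : ip X (T w Y) = ip (T (rev w) X) Y.
Proof. by rewrite ipC T_adj ipC. Qed.

Variables (Zw rW u : seq Sigma).

Definition SB N (X : M) := \sum_(k < N) T (pw Zw k) X.
Definition SQ N (X : M) := \sum_(k < N) T (pw rW k) X.
Definition SS N (X Y : M) := ip (SQ N Y) (T u (SB N X)).

Lemma SB_tele N z : SB N (z - T Zw z) = z - T (pw Zw N) z.
Proof.
rewrite /SB; elim: N => [|N IH]; first by rewrite big_ord0 /pw /= subrr.
rewrite big_ord_recr /= IH linearB /= -T_cat -pwS.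
by rewrite addrA subrK.
Qed.
Lemma SQ_tele N z : SQ N (z - T rW z) = z - T (pw rW N) z.
Proof.
rewrite /SQ; elim: N => [|N IH]; first by rewrite big_ord0 /pw /= subrr.
rewrite big_ord_recr /= IH linearB /= -T_cat -pwS.
by rewrite addrA subrK.
Qed.

Lemma SB_D N X Y : SB N (X + Y) = SB N X + SB N Y.
Proof. by rewrite /SB -big_split; apply: eq_bigr => k _; rewrite linearD. Qed.
Lemma SQ_D N X Y : SQ N (X + Y) = SQ N X + SQ N Y.
Proof. by rewrite /SQ -big_split; apply: eq_bigr => k _; rewrite linearD. Qed.

Lemma SB_nn N X : nn (SB N X) <= N%:R ^+ 2 * nn X.
Proof.
apply: le_trans (nn_sum _) _; rewrite expr2 -mulrA ler_wpM2l ?ler0n //.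
apply: le_trans (_ : \sum_(k < N) nn (T (pw Zw k) X) <= \sum_(k < N) nn X) _.
  by apply: ler_sum => k _; apply: T_contr.
by rewrite sumr_const card_ord mulr_natl.
Qed.
Lemma SQ_nn N X : nn (SQ N X) <= N%:R ^+ 2 * nn X.
Proof.
apply: le_trans (nn_sum _) _; rewrite expr2 -mulrA ler_wpM2l ?ler0n //.
apply: le_trans (_ : \sum_(k < N) nn (T (pw rW k) X) <= \sum_(k < N) nn X) _.
  by apply: ler_sum => k _; apply: T_contr.
by rewrite sumr_const card_ord mulr_natl.
Qed.

Lemma nn_tele w N z : nn (z - T (pw w N) z) <= 4 * nn z.
Proof.
apply: le_trans (nn_sub _ _) _; have := T_contr A (pw w N) z; lra.
Qed.

Lemma SS_diff N rho z q z' : (0 < N)%N ->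
  2 * N%:R * `|SS N (rho + (z - T Zw z)) (q + (z' - T rW z')) - SS N rho q|
  <= N%:R ^+ 2 * (2 * nn q + 8 * nn z' + 4 * nn z + 4 * nn z' + nn rho).
Proof.
move=> N0.
rewrite /SS SB_D SQ_D SB_tele SQ_tele linearD /=.
set Aq := SQ N q; set Bp := SB N rho.
set E := z - T (pw Zw N) z; set E' := z' - T (pw rW N) z'.
have -> : ip (Aq + E') (T u Bp + T u E) - ip Aq (T u Bp)
    = ip (Aq + E') (T u E) + ip E' (T u Bp).
  rewrite ipDr !ipDl; lra.
have NN1 : 1 <= N%:R :> R by rewrite ler1n.
have P1 : 1 <= N%:R ^+ 2 :> R by rewrite expr_ge1 // ler0n.
have hE : nn (T u E) <= 4 * nn z by apply: le_trans (T_contr _ _ _) (nn_tele _ _ _).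
have hE' : nn E' <= 4 * nn z' by apply: nn_tele.
have hA : nn Aq <= N%:R ^+ 2 * nn q by apply: SQ_nn.
have hB : nn (T u Bp) <= N%:R ^+ 2 * nn rho by apply: le_trans (T_contr _ _ _) (SB_nn _ _).
have hAE : nn (Aq + E') <= 2 * nn Aq + 2 * nn E' by apply: nn_add.
have j1 := @IPB _ _ N%:R 1 (Aq + E') (T u E) (ler0n _ _) ler01.
have j2 := @IPB _ _ 1 N%:R E' (T u Bp) ler01 (ler0n _ _).
rewrite expr1n mul1r mulr1 in j1; rewrite expr1n mul1r mulr1 in j2.
have nz0 := nn_ge0 z; have nz0' := nn_ge0 z'.
have h8 : 8 * nn z' <= N%:R ^+ 2 * (8 * nn z') by rewrite ler_peMl // mulr_ge0.
apply: le_trans (_ : 2 * N%:R * (`|ip (Aq + E') (T u E)| + `|ip E' (T u Bp)|) <= _).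
  by rewrite ler_wpM2l ?mulr_ge0 ?ler0n // ler_normD.
set P := N%:R ^+ 2 in P1 j1 j2 h8 hA hB *.
have hPE : P * nn (T u E) <= P * (4 * nn z) by rewrite ler_wpM2l // (le_trans ler01).
have hPE' : P * nn E' <= P * (4 * nn z') by rewrite ler_wpM2l // (le_trans ler01).
nra.
Qed.

End Anal.


Lemma contra_N (R : realType) (K d : R) (N : nat) : 0 < d -> 0 < N%:R :> R ->
  K < N%:R * d -> forall D : R, 2 * d * N%:R ^+ 2 <= `|D| ->
  2 * N%:R * `|D| <= N%:R ^+ 2 * K -> False.
Proof.
move=> d0 N0 hK D h1 h2.
have e1 : 2 * N%:R * (2 * d * N%:R ^+ 2) <= 2 * N%:R * `|D|.
  by rewrite ler_wpM2l // mulr_ge0 // ltW.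
have e2 : N%:R ^+ 2 * (4 * d * N%:R) <= N%:R ^+ 2 * K.
  rewrite (_ : N%:R ^+ 2 * (4 * d * N%:R) = 2 * N%:R * (2 * d * N%:R ^+ 2)).
    exact: le_trans e1 h2.
  ring.
rewrite ler_pM2l ?exprn_gt0 // in e2.
have : 0 < N%:R * d by apply: mulr_gt0.
lra.
Qed.

Section JT.
Variables (R : realType) (Sigma : finType) (m : nat) (A : mon1qfa R Sigma m).
Variables (L : pred (seq Sigma)) (lam d : R).
Hypothesis HL : forall x, L x <-> lam < acc_prob A x.
Hypothesis Hd : 0 < d.
Hypothesis Hsep : forall x, d <= `|acc_prob A x - lam|.
Local Notation C := R[i].
Local Notation M := 'M[C]_m.
Local Notation T := (T A).
Local Notation "u ~ v" := (synt_eq L u v) (at level 70).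

Lemma SS_acc Zw Ww u x' y' N :
  SS A Zw (rev Ww) u N (rho_of A x') (T (rev y') (Qm A)) =
  \sum_(n' < N) \sum_(n < N) acc_prob A (x' ++ (pw Zw n ++ u ++ pw Ww n') ++ y').
Proof.
rewrite /SS /SQ /SB ip_suml; apply: eq_bigr => n' _.
rewrite [T u _]linear_sum ip_sumr; apply: eq_bigr => n _.
by rewrite acc_split !T_cat T_adj' rev_pw.
Qed.


Lemma side_sum2 N (F : 'I_N -> 'I_N -> seq Sigma) (b : bool) :
  (forall i j, L (F i j) = b) ->
  if b then N%:R ^+ 2 * (lam + d) <= \sum_(i < N) \sum_(j < N) acc_prob A (F i j)
  else \sum_(i < N) \sum_(j < N) acc_prob A (F i j) <= N%:R ^+ 2 * (lam - d).
Proof.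
move=> h; have cst (c : R) : \sum_(i < N) \sum_(j < N) c = N%:R ^+ 2 * c.
  by rewrite !sumr_const !card_ord -mulrnA -natrX mulr_natl mulnn.
case: b h => h.
  rewrite -cst; apply: ler_sum => i _; apply: ler_sum => j _.
  by apply: (L_true HL Hsep); rewrite h.
rewrite -cst; apply: ler_sum => i _; apply: ler_sum => j _.
by apply: (L_false HL Hsep); rewrite h.
Qed.

Lemma J_triv : synt_J_trivial L.
Proof.
move=> u v H.
have [a [b hu]] : in_ideal L v u.
  by apply/H; exists [::], [::]; rewrite /= cats0.
have [c [e hv]] : in_ideal L u v.
  by apply/H; exists [::], [::]; rewrite /= cats0.
pose X := a ++ c; pose Y := e ++ b.
have hXY : u ~ X ++ u ++ Y.
  apply: synt_trans hu _; have := synt_cong a b hv; by rewrite /X /Y !catA.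
have [p [p0 [hX hY]]] := idem_pow2 (regular_L HL Hd Hsep) X Y.
pose Zw := pw X p; pose Ww := pw Y p.
have hk k : u ~ pw X k ++ u ++ pw Y k.
  elim: k => [|k IH]; first by rewrite /pw /= cats0.
  apply: synt_trans IH _.
  have := synt_cong (pw X k) (pw Y k) hXY.
  by rewrite pwSr pwS !catA.
have hp := hk p.
have uL : u ~ Zw ++ u.
  apply: synt_sym; apply: synt_trans (synt_congl Zw hp) _.
  apply: synt_trans _ (synt_sym hp).
  have := synt_congr (u ++ Ww) hX; by rewrite pwD !catA.
have uR : u ~ u ++ Ww.
  apply: synt_sym; apply: synt_trans (synt_congr Ww hp) _.
  apply: synt_trans _ (synt_sym hp).
  have := synt_congl (Zw ++ u) hY; by rewrite pwD !catA.
have hL n : u ~ pw Zw n ++ u.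
  elim: n => [|n IH] //; apply: synt_trans IH _.
  rewrite pwSr -catA; exact: synt_congl.
have hR n : u ~ u ++ pw Ww n.
  elim: n => [|n IH]; first by rewrite /pw /= cats0.
  apply: synt_trans IH _.
  rewrite pwS catA; exact: synt_congr.
have hn n n' : u ~ pw Zw n ++ u ++ pw Ww n'.
  apply: synt_trans (hL n) _; exact: synt_congl.
move=> x y.
have mem_pw (w : seq Sigma) k s : (0 < k)%N -> s \in w -> s \in pw w k.
  by case: k => // k _ hs; rewrite pwS mem_cat hs.
have hc : forall s, s \in c -> s \in Zw.
  by move=> s hs; apply: mem_pw p0 _; rewrite /X mem_cat hs orbT.
have he : forall s, s \in e -> s \in rev Ww.
  by move=> s hs; rewrite mem_rev; apply: mem_pw p0 _; rewrite /Y mem_cat hs.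
set rho := rho_of A x; set q := T (rev y) (Qm A).
have [z hz] : exists z, rho_of A (x ++ c) - rho = z - T Zw z.
  apply: dec => f hf.
  have hf' : T (rev c) f = f.
    apply: fix_T => s; rewrite mem_rev => hs; apply: (T_fix_eq hf); exact: hc.
  by rewrite ipBl /rho rho_ofE T_cat T_adj hf' subrr.
have [z' hz'] : exists z', T (rev (e ++ y)) (Qm A) - q = z' - T (rev Ww) z'.
  apply: dec => f hf.
  have hf' : T e f = f.
    apply: fix_T => s hs; apply: (T_fix_eq hf); exact: he.
  by rewrite ipBl rev_cat T_cat T_adj revK hf' subrr.
have rE : rho_of A (x ++ c) = rho + (z - T Zw z) by rewrite -hz addrC subrK.
have qE : T (rev (e ++ y)) (Qm A) = q + (z' - T (rev Ww) z') by rewrite -hz' addrC subrK.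
pose K := 2 * nn q + 8 * nn z' + 4 * nn z + 4 * nn z' + nn rho.
pose N := (Num.bound (K / d)).+1.
have N0 : (0 < N)%N by [].
have N0' : 0 < N%:R :> R by rewrite ltr0n.
have hK : K < N%:R * d.
  have k0 : 0 <= K / d.
    apply: divr_ge0; last exact: ltW.
    by rewrite /K !addr_ge0 ?mulr_ge0 ?nn_ge0.
  have := archi_boundP k0; rewrite ltr_pdivrMr // => h.
  apply: lt_le_trans h _; rewrite ler_pM2r // ler_nat /N; by [].
have hdiff := SS_diff A Zw (rev Ww) u rho z q z' N0.
rewrite -rE -qE !SS_acc in hdiff.
set Su := \sum_(n' < N) \sum_(n < N) acc_prob A (x ++ _ ++ y) in hdiff.
set Sv := \sum_(n' < N) \sum_(n < N) acc_prob A ((x ++ c) ++ _ ++ (e ++ y)) in hdiff.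
have bu := @side_sum2 N (fun n' n => x ++ (pw Zw n ++ u ++ pw Ww n') ++ y)
            (L (x ++ u ++ y)) (fun i j => esym (hn j i x y)).
have bv := @side_sum2 N (fun n' n => (x ++ c) ++ (pw Zw n ++ u ++ pw Ww n') ++ (e ++ y))
            (L (x ++ v ++ y)).
have bv' : forall i j : 'I_N, L ((x ++ c) ++ (pw Zw j ++ u ++ pw Ww i) ++ (e ++ y)) = L (x ++ v ++ y).
  move=> i j; rewrite (hv x y) -(hn j i (x ++ c) (e ++ y)).
  by rewrite !catA.
have {bv bv'} bv := bv bv'.
rewrite -/Su in bu; rewrite -/Sv in bv.
case Lu : (L (x ++ u ++ y)) in bu *; case Lv : (L (x ++ v ++ y)) in bv * => //.
  exfalso; apply: (contra_N Hd N0' hK _ hdiff).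
  rewrite distrC ler_normr; apply/orP; left; lra.
exfalso; apply: (contra_N Hd N0' hK _ hdiff).
rewrite ler_normr; apply/orP; left; lra.
Qed.

End JT.

Unset Implicit Arguments.
Theorem theorem4 (R : realType) (Sigma : finType) (L : pred (seq Sigma)) :
  LMO R L -> in_V_Jbar L.
Proof.
move=> [m [A [lam [HL [d Hd Hsep]]]]].
split; first exact: (regular_L HL Hd Hsep).
split; first exact: (J_triv HL Hd Hsep).
exact: (letters_idem HL).
Qed.
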